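(* Let $s,i$ be MIAs over $I$ and $O$ such that $i$ is input-enabled. If $i\ \mathbf{mioco}\ s$, then for every MIA $i'$ with $i'\sqsubseteq i$ it holds that $i'\ \mathbf{mioco}\ s$.
   Context: A Modal Interface Automaton (MIA) over disjoint alphabets $I,O$ is a tuple $(Q,I,O,\longrightarrow_\Box,\longrightarrow_\Diamond)$ with $Q$ a finite set of states and must/may transition relations $\longrightarrow_\Box,\longrightarrow_\Diamond\subseteq Q\times(I\cup O)\times Q$ such that every must transition is a may transition, and for inputs $i\in I$: must $i$-transitions are deterministic, and every may $i$-transition is a must transition. A MIA is input-enabled iff every state has an outgoing must transition for every input. MIA-refinement: $\mathcal R\subseteq P\times Q$ is a MIA-refinement iff for all $(p,q)\in\mathcal R$: (1) $q\overset{a}{\longrightarrow}_\Box q'$, $a\in I\cup O$, implies $\exists p'$: $p\overset{a}{\longrightarrow}_\Box p'$, $(p',q')\in\mathcal R$; (2) $p\overset{\alpha}{\longrightarrow}_\Diamond p'$, $\alpha\in O$, implies $\exists q'$: $q\overset{\alpha}{\longrightarrow}_\Diamond q'$, $(p',q')\in\mathcal R$; $p\sqsubseteq q$ iff some MIA-refinement contains $(p,q)$. For $\gamma\in\{\Box,\Diamond\}$: $init_\gamma(p)=\{\mu\in I\cup O\mid p\overset{\mu}{\longrightarrow}_\gamma\}$; $\delta_\Diamond(p)$ (may-quiescent) iff $init_\Box(p)\subseteq I$; $\delta_\Box(p)$ (must-quiescent) iff $init_\Diamond(p)\subseteq I$; the symbol $\delta_\gamma$ acts as a $\gamma$-self-loop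 at states $q$ with $\delta_\gamma(q)$; $p\ \mathrm{after}_\gamma\ \sigma$ is the set of states reachable from $p$ by a $\gamma$-path (including $\delta_\gamma$-loops) labeled $\sigma$ (for a set of states, the union); $Out_\gamma(P)=\{\mu\in O\mid\exists p\in P:p\overset{\mu}{\longrightarrow}_\gamma\}\cup\{\delta_\gamma\mid\exists p\in P:\delta_\gamma(p)\}$; $Straces_\gamma(p)$ is the set of words $\sigma$ over $I\cup O\cup\{\delta_\gamma\}$ with $p\overset{\sigma}{\longrightarrow}_\gamma$. For MIAs $s,i$ with $i$ input-enabled, $i\ \mathbf{mioco}\ s$ iff (1) for all $\sigma\in Straces_\Diamond(s)$: $Out_\Diamond(i\ \mathrm{after}_\Diamond\ \sigma)\subseteq Out_\Diamond(s\ \mathrm{after}_\Diamond\ \sigma)$, and (2) for all $\sigma\in Straces_\Box(i)$: $Out_\Box(s\ \mathrm{after}_\Box\ \sigma)\subseteq Out_\Box(i\ \mathrm{after}_\Box\ \sigma)$. *)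

(* Defs.v *)
From mathcomp Require Import all_boot.

(* Actions over disjoint alphabets I and O: the disjoint sum I + O
   (inl = input, inr = output). *)

Record MIA (I O : Type) := {
  st : finType;
  must : st -> I + O -> st -> Prop;
  may  : st -> I + O -> st -> Prop;
  init : st;
  must_may : forall p a q, must p a q -> may p a q;
  must_in_det : forall p i q q', must p (inl i) q -> must p (inl i) q' -> q = q';
  may_in_must : forall p i q, may p (inl i) q -> must p (inl i) q
}.
Arguments must {I O} _ _ _ _.
Arguments may {I O} _ _ _ _.
Arguments init {I O} _.
Arguments st {I O} _.

Inductive modality := Must | May.

Definition trans {I O} (g : modality) (M : MIA I O) : st M -> I + O -> st M -> Prop :=
  match g with Must => must M | May => may M end.

Definition input_enabled {I O} (M : MIA I O) : Prop :=
  forall (p : st M) (i : I), exists q, must M p (inl i) q.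

Definition is_MIA_refinement {I O} (P Q : MIA I O) (R : st P -> st Q -> Prop) : Prop :=
  forall p q, R p q ->
    (forall a q', must Q q a q' -> exists p', must P p a p' /\ R p' q') /\
    (forall (o : O) p', may P p (inr o) p' -> exists q', may Q q (inr o) q' /\ R p' q').

Definition refines_st {I O} (P Q : MIA I O) (p : st P) (q : st Q) : Prop :=
  exists R, is_MIA_refinement P Q R /\ R p q.

Definition MIA_refines {I O} (P Q : MIA I O) : Prop := refines_st P Q (init P) (init Q).

(* quiescence: delta_May p iff init_Must(p) ⊆ I ; delta_Must p iff init_May(p) ⊆ I *)
Definition quiescent {I O} (g : modality) (M : MIA I O) (p : st M) : Prop :=
  match g with
  | May  => forall a q, must M p a q -> exists i, a = inl i
  | Must => forall a q, may M p a q -> exists i, a = inl i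
  end.

(* labels of suspension traces: actions or the quiescence symbol delta_gamma *)
Inductive lab (I O : Type) := LA of I + O | LD.
Arguments LA {I O} _.
Arguments LD {I O}.

(* gamma-paths, with delta_gamma acting as a self-loop at quiescent states *)
Inductive reach {I O} (g : modality) (M : MIA I O) : st M -> seq (lab I O) -> st M -> Prop :=
| reach_nil p : reach g M p [::] p
| reach_act p a p' s q : trans g M p a p' -> reach g M p' s q -> reach g M p (LA a :: s) q
| reach_delta p s q : quiescent g M p -> reach g M p s q -> reach g M p (LD :: s) q.

Definition after {I O} (g : modality) (M : MIA I O) (s : seq (lab I O)) : st M -> Prop :=
  fun q => reach g M (init M) s q.

Definition Straces {I O} (g : modality) (M : MIA I O) (s : seq (lab I O)) : Prop :=
  exists q, reach g M (init M) s q.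

Definition Out {I O} (g : modality) (M : MIA I O) (P : st M -> Prop) (x : lab I O) : Prop :=
  match x with
  | LA (inl _) => False
  | LA (inr o) => exists p p', P p /\ trans g M p (inr o) p'
  | LD => exists p, P p /\ quiescent g M p
  end.

(* i mioco s (input-enabledness of i is a separate hypothesis) *)
Definition mioco {I O} (i s : MIA I O) : Prop :=
  (forall sigma, Straces May s sigma ->
     forall x, Out May i (after May i sigma) x -> Out May s (after May s sigma) x) /\
  (forall sigma, Straces Must i sigma ->
     forall x, Out Must s (after Must s sigma) x -> Out Must i (after Must i sigma) x).

(* Main.v *)
Require Import Defs.
From mathcomp Require Import all_boot.

Arguments must_in_det {I O m} {p i q q'}.
Arguments may_in_must {I O m} {p i q}.
Arguments must_may {I O m} {p a q}.
Section S.
Variables (I O : Type).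

Lemma reach_cat {g} {M : MIA I O} {p t r u q} :
  reach g M p t r -> reach g M r u q -> reach g M p (t ++ u) q.
Proof.
elim=> //= [p0 a p1 s0 q0 H _ IH|p0 s0 q0 H _ IH] Hr.
- apply: reach_act H _; exact: IH.
- apply: reach_delta H _; exact: IH.
Qed.

Lemma reach_rcons {g} {M : MIA I O} {t l p q} :
  reach g M p (rcons t l) q -> exists r, reach g M p t r /\ reach g M r [:: l] q.
Proof.
elim: t p => [|a t IH] p /=.
  move=> H; exists p; split => //; exact: reach_nil.
move=> H; inversion H as [|p0 a0 p1 s0 q0 Ht Hr|p0 s0 q0 Hq Hr]; subst.
- have [r [H1 H2]] := IH _ Hr. exists r; split => //; exact: reach_act Ht H1.
- have [r [H1 H2]] := IH _ Hr. exists r; split => //; exact: reach_delta Hq H1.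
Qed.

Lemma reach_prefix g (M : MIA I O) t l p q :
  reach g M p (rcons t l) q -> exists r, reach g M p t r.
Proof. by move=> /reach_rcons [r [H _]]; exists r. Qed.

Lemma sim_may (i' i : MIA I O) R : input_enabled i -> is_MIA_refinement i' i R ->
  forall p' s q', reach May i' p' s q' -> forall p, R p' p ->
  exists q, R q' q /\ reach May i p s q.
Proof.
move=> Hen HR p' s q'; elim=> {p' s q'}.
- move=> p' p Hp; exists p; split => //; exact: reach_nil.
- move=> p' a p1 s q' Ht _ IH p Hp.
  case: a Ht => [x|o] /= Ht.
  + have [q1 Hq1] := Hen p x.
    have [p2 [Hm2 HR2]] := (HR _ _ Hp).1 _ _ Hq1.
    have E := must_in_det Hm2 (may_in_must Ht). subst p2.
    have [q [H1 H2]] := IH _ HR2. exists q; split => //.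
    apply: (@reach_act _ _ _ _ _ _ q1) => //=; exact: must_may.
  + have [q1 [Hq1 HR1]] := (HR _ _ Hp).2 _ _ Ht.
    have [q [H1 H2]] := IH _ HR1. exists q; split => //; exact: (@reach_act _ _ _ _ _ _ q1).
- move=> p' s q' Hq _ IH p Hp.
  have [q [H1 H2]] := IH _ Hp. exists q; split => //.
  apply: reach_delta => //= a q1 Hm.
  have [p2 [Hm2 _]] := (HR _ _ Hp).1 _ _ Hm.
  exact: Hq Hm2.
Qed.

Lemma sim_must (i' i : MIA I O) R : is_MIA_refinement i' i R ->
  forall p s q, reach Must i p s q -> forall p', R p' p ->
  exists q', R q' q /\ reach Must i' p' s q'.
Proof.
move=> HR p s q; elim=> {p s q}.
- move=> p p' Hp; exists p'; split => //; exact: reach_nil.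
- move=> p a p1 s q Ht _ IH p' Hp.
  have [p2 [Hm2 HR2]] := (HR _ _ Hp).1 _ _ Ht.
  have [q' [H1 H2]] := IH _ HR2. exists q'; split => //; exact: (@reach_act _ _ _ _ _ _ p2).
- move=> p s q Hq _ IH p' Hp.
  have [q' [H1 H2]] := IH _ Hp. exists q'; split => //.
  apply: reach_delta => //= a q1 Hm.
  case: a Hm => [x|o] Hm; first by exists x.
  have [q2 [Hm2 _]] := (HR _ _ Hp).2 _ _ Hm.
  exact: Hq Hm2.
Qed.

Lemma straces_i (s i : MIA I O) : input_enabled i ->
  (forall sigma, Straces Must i sigma ->
     forall x, Out Must s (after Must s sigma) x -> Out Must i (after Must i sigma) x) ->
  forall sigma, Straces Must s sigma -> Straces Must i sigma.
Proof.
move=> Hen H2; elim/last_ind => [|t l IH] Hs.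
  exists (init i); exact: reach_nil.
have [q Hq] := Hs.
have [r [Hr Hl]] := reach_rcons Hq.
have Ht : Straces Must i t by apply: IH; exists r.
have Hstep : exists r', after Must i t r' /\ exists q', reach Must i r' [:: l] q'.
  inversion Hl as [|p0 a p' s0 q0 H3 H4|p0 s0 q0 H3 H4]; subst.
  - case: a H3 H4 Hs Hq Hl => [x|o] H3 H4 Hs Hq Hl.
    + have [r' Hr'] := Ht. have [q1 Hq1] := Hen r' x.
      exists r'; split => //; exists q1; apply: (@reach_act _ _ _ _ _ _ q1) => //; exact: reach_nil.
    + have [r' [q1 [Hr' Hq1]]] : Out Must i (after Must i t) (LA (inr o)).
        apply: H2 => //; by exists r, p'.
      exists r'; split => //; exists q1; apply: (@reach_act _ _ _ _ _ _ q1) => //; exact: reach_nil.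
  - have [r' [Hr' Hq']] : Out Must i (after Must i t) LD.
      apply: H2 => //; by exists r.
    exists r'; split => //; exists r'; apply: reach_delta => //; exact: reach_nil.
have [r' [Hr' [q' Hq']]] := Hstep.
exists q'; rewrite -cats1; exact: reach_cat Hr' Hq'.
Qed.

End S.
Arguments sim_may {I O i' i R}.
Arguments sim_must {I O i' i R}.
Arguments straces_i {I O s i}.

Theorem proposition2 (I O : Type) (s i : MIA I O) :
  input_enabled i -> mioco i s ->
  forall i' : MIA I O, MIA_refines i' i -> mioco i' s.
Proof.
move=> Hen [H1 H2] i' [R [HR H0]]; split.
- move=> sigma Hs x Hx; apply: (H1 _ Hs).
  case: x Hx => [[a|o]|] //=.
  + move=> [p' [p1 [Hp' Ht]]].
    have [q [Hq Hrq]] := sim_may Hen HR _ _ _ Hp' _ H0.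
    have [q1 [Hq1 _]] := (HR _ _ Hq).2 _ _ Ht.
    by exists q, q1.
  + move=> [p' [Hp' Hq']].
    have [q [Hq Hrq]] := sim_may Hen HR _ _ _ Hp' _ H0.
    exists q; split => // a q1 Hm.
    have [p2 [Hm2 _]] := (HR _ _ Hq).1 _ _ Hm. exact: Hq' Hm2.
- move=> sigma _ x Hx.
  have Hs : Straces Must s sigma.
    case: x Hx => [[a|o]|] //=; [move=> [p [_ [Hp _]]] | move=> [p [Hp _]]]; by exists p.
  have Hi := straces_i Hen H2 _ Hs.
  have := H2 _ Hi _ Hx.
  case: x {Hx} => [[a|o]|] //=.
  + move=> [q [q1 [Hq Ht]]].
    have [q' [Hq' Hr']] := sim_must HR _ _ _ Hq _ H0.
    have [p2 [Hm2 _]] := (HR _ _ Hq').1 _ _ Ht.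
    by exists q', p2.
  + move=> [q [Hq Hqq]].
    have [q' [Hq' Hr']] := sim_must HR _ _ _ Hq _ H0.
    exists q'; split => // a q1 Hm.
    case: a Hm => [y|o] Hm; first by exists y.
    have [q2 [Hm2 _]] := (HR _ _ Hq').2 _ _ Hm. exact: Hqq Hm2.
Qed.
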